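(* Let $X$ be the graph with vertices $x_0,x_1,x_2,x_3,x_4,\bar x_4$ and (besides loops) edges $x_0x_1, x_1x_2, x_2x_3, x_3x_4, x_4x_0, x_3\bar x_4, \bar x_4x_0$. Define $\tau:X\times X\to X$ by $\tau(x_i,x_j)=x_{i+j}$; $\tau(x_0,\bar x_4)=\tau(\bar x_4,x_0)=\bar x_4$; $\tau(x_i,\bar x_4)=\tau(\bar x_4,x_i)=x_{i+4}$ for $i\ne0$; $\tau(\bar x_4,\bar x_4)=x_3$ (subscripts mod 5). Then $\tau$ is $\mathrm{NP}_1$-continuous, $(X,x_0,\tau)$ is a unital (hence pointed) $\mathrm{NP}_1$-digital H-space, and $(X,x_0,\tau)$ is not pointed homotopy-associative; consequently it is not pointed H-equivalent to any $\mathrm{NP}_1$-digital topological group.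
   Context: Digital images are finite reflexive graphs; continuous maps send adjacent points to adjacent points. On products, $\mathrm{NP}_1$ declares two tuples adjacent iff they differ in at most one coordinate, and in that coordinate the entries are adjacent. An $\mathrm{NP}_1$-homotopy from $f$ to $g:X\to Y$ is an $\mathrm{NP}_1$-continuous $H:X\times[0,m]_{\mathbb{Z}}\to Y$ with $H(\cdot,0)=f$, $H(\cdot,m)=g$; for pointed maps $(X,a)\to(Y,b)$ it is pointed if $H(a,t)=b$ for all $t$. An $\mathrm{NP}_1$-digital H-space is $(X,e,\mu)$ with $\mu:X\times X\to X$ $\mathrm{NP}_1$-continuous, $\mu\circ(\mathrm{id}_X,c_e)\simeq_1\mathrm{id}_X$, $\mu\circ(c_e,\mathrm{id}_X)\simeq_1\mathrm{id}_X$ ($(f,g)(x)=(f(x),g(x))$, $c_e$ constant); it is a pointed H-space if these homotopies are pointed; unital if the composites equal $\mathrm{id}_X$. It is pointed homotopy-associative if $\mu\circ(\mathrm{id}\times\mu)$ and $\mu\circ(\mu\times\mathrm{id})$ are homotopic by a pointed $\mathrm{NP}_1$-homotopy $(X\times X\times X,(e,e,e))\times[0,k]_{\mathbb{Z}}\to(X,e)$. Pointed H-equivalence: continuous pointed maps $f,g$ between the H-spaces with $f\circ g\simeq\mathrm{id}$, $g\circ f\simeq\mathrm{id}$, $f\circ\mu_X\simeq\mu_Y\circ(f\times f)$, $g\circ\mu_Y\simeq\mu_X\circ(g\times g)$, all by pointed $\mathrm{NP}_1$-homotopies. An $\mathrm{NP}_1$-digital topological group is a digital image with a group structure whose multiplication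 is $\mathrm{NP}_1$-continuous and inversion continuous. *)

(* Defs.v *)
From mathcomp Require Import all_boot all_fingroup.
Set Implicit Arguments. Unset Strict Implicit. Unset Printing Implicit Defensive.

Definition digital_image (A : finType) (adjA : rel A) :=
  reflexive adjA /\ symmetric adjA.

Definition dcont (A B : Type) (adjA : rel A) (adjB : rel B) (f : A -> B) :=
  forall x y, adjA x y -> adjB (f x) (f y).

(* NP_1 adjacency on a binary product (iterated products are nested pairs;
   nesting NP_1 gives NP_1 on the n-fold product) *)
Definition np1 (A B : eqType) (adjA : rel A) (adjB : rel B) : rel (A * B) :=
  fun p q => ((p.1 == q.1) && adjB p.2 q.2) || ((p.2 == q.2) && adjA p.1 q.1).

(* the digital interval [0,m]_Z, as 'I_m.+1 with c_2-adjacency *)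
Definition iadj (m : nat) : rel 'I_m.+1 :=
  fun i j => (i <= j.+1) && (j <= i.+1).

Definition np1_homotopic (A B : eqType) (adjA : rel A) (adjB : rel B)
  (f g : A -> B) :=
  exists m : nat, exists H : A * 'I_m.+1 -> B,
    dcont (np1 adjA (@iadj m)) adjB H /\
    (forall x, H (x, ord0) = f x) /\ (forall x, H (x, ord_max) = g x).

Definition np1_pointed_homotopic (A B : eqType) (adjA : rel A) (adjB : rel B)
  (a : A) (b : B) (f g : A -> B) :=
  exists m : nat, exists H : A * 'I_m.+1 -> B,
    dcont (np1 adjA (@iadj m)) adjB H /\
    (forall x, H (x, ord0) = f x) /\ (forall x, H (x, ord_max) = g x) /\
    (forall t, H (a, t) = b).

Definition H_space (A : eqType) (adj : rel A) (e : A) (mu : A * A -> A) :=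
  dcont (np1 adj adj) adj mu /\
  np1_homotopic adj adj (fun x => mu (x, e)) id /\
  np1_homotopic adj adj (fun x => mu (e, x)) id.

Definition pointed_H_space (A : eqType) (adj : rel A) (e : A) (mu : A * A -> A) :=
  dcont (np1 adj adj) adj mu /\
  np1_pointed_homotopic adj adj e e (fun x => mu (x, e)) id /\
  np1_pointed_homotopic adj adj e e (fun x => mu (e, x)) id.

Definition unital_H_space (A : eqType) (adj : rel A) (e : A) (mu : A * A -> A) :=
  dcont (np1 adj adj) adj mu /\
  (forall x, mu (x, e) = x) /\ (forall x, mu (e, x) = x).

(* pointed homotopy-associativity; X*X*X is (X*X)*X *)
Definition pointed_homotopy_associative (A : eqType) (adj : rel A) (e : A)
  (mu : A * A -> A) :=
  np1_pointed_homotopic (np1 (np1 adj adj) adj) adj ((e, e), e) e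
    (fun p => mu (p.1.1, mu (p.1.2, p.2)))
    (fun p => mu (mu p.1, p.2)).

Definition pointed_H_equivalent (X Y : eqType)
  (adjX : rel X) (eX : X) (muX : X * X -> X)
  (adjY : rel Y) (eY : Y) (muY : Y * Y -> Y) :=
  exists (f : X -> Y) (g : Y -> X),
    dcont adjX adjY f /\ f eX = eY /\
    dcont adjY adjX g /\ g eY = eX /\
    np1_pointed_homotopic adjY adjY eY eY (fun y => f (g y)) id /\
    np1_pointed_homotopic adjX adjX eX eX (fun x => g (f x)) id /\
    np1_pointed_homotopic (np1 adjX adjX) adjY (eX, eX) eY
      (fun p => f (muX p)) (fun p => muY (f p.1, f p.2)) /\
    np1_pointed_homotopic (np1 adjY adjY) adjX (eY, eY) eX
      (fun p => g (muY p)) (fun p => muX (g p.1, g p.2)).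

Definition np1_digital_topological_group (G : finGroupType) (adj : rel G) :=
  digital_image adj /\
  dcont (np1 adj adj) adj (fun p : G * G => (p.1 * p.2)%g) /\
  dcont adj adj (fun x : G => (x^-1)%g).

(* The example: vertices x_0..x_4 are 0..4, \bar x_4 is 5, in 'I_6 *)
Definition Xedges : seq (nat * nat) :=
  [:: (0,1); (1,2); (2,3); (3,4); (4,0); (3,5); (5,0)].

Definition adjX : rel 'I_6 :=
  fun a b => [|| a == b, (val a, val b) \in Xedges | (val b, val a) \in Xedges].

Definition x0 : 'I_6 := inord 0.

Definition tau (p : 'I_6 * 'I_6) : 'I_6 :=
  let i := val p.1 in let j := val p.2 in
  if (i < 5) && (j < 5) then inord ((i + j) %% 5)
  else if (i == 5) && (j == 5) then inord 3
  else let k := if i == 5 then j else i in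
       if k == 0 then inord 5 else inord ((k + 4) %% 5).

(* Main.v *)
Require Import Defs.
From mathcomp Require Import all_boot all_fingroup.
From mathcomp Require Import zify.
Set Implicit Arguments. Unset Strict Implicit. Unset Printing Implicit Defensive.

Definition o0 : 'I_6 := Ordinal (isT : 0 < 6).
Definition o1 : 'I_6 := Ordinal (isT : 1 < 6).
Definition o2 : 'I_6 := Ordinal (isT : 2 < 6).
Definition o3 : 'I_6 := Ordinal (isT : 3 < 6).
Definition o4 : 'I_6 := Ordinal (isT : 4 < 6).
Definition o5 : 'I_6 := Ordinal (isT : 5 < 6).
Definition all6 : seq 'I_6 := [:: o0; o1; o2; o3; o4; o5].

Lemma all6P (y : 'I_6) : y \in all6.
Proof.
case: y => [[|[|[|[|[|[|k]]]]]] Hk] //; by rewrite ?inE; apply/orP; [left|right]; rewrite ?inE ?eqxx //= ?orbT.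
Qed.

Lemma all6_forall (P : 'I_6 -> bool) : all P all6 -> forall x, P x.
Proof. by move/allP => H x; apply: H; apply: all6P. Qed.

Definition ord_of (k : nat) : 'I_6 := nth o0 all6 k.
Lemma ord_ofE k : k < 6 -> ord_of k = inord k.
Proof.
move=> Hk; apply: val_inj; rewrite /= inordK //.
by case: k Hk => [|[|[|[|[|[|k]]]]]].
Qed.

Definition tau' (p : 'I_6 * 'I_6) : 'I_6 :=
  let i := val p.1 in let j := val p.2 in
  if (i < 5) && (j < 5) then ord_of ((i + j) %% 5)
  else if (i == 5) && (j == 5) then ord_of 3
  else let k := if i == 5 then j else i in
       if k == 0 then ord_of 5 else ord_of ((k + 4) %% 5).

Lemma tauE p : tau p = tau' p.
Proof.
have H5 : forall k, k %% 5 < 6 by move=> k; apply: ltn_trans (ltn_pmod _ _) _.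
rewrite /tau /tau'; case: ifP => _; first by rewrite ord_ofE.
case: ifP => _; first by rewrite ord_ofE.
by case: ifP => _; rewrite ord_ofE.
Qed.

Lemma x0E : x0 = o0.
Proof. by apply: val_inj; rewrite /= inordK. Qed.

Section Rigid.
Variables (T : eqType) (adjT : rel T) (base : T) (r : T -> 'I_6) (listT : seq T) (t0 : T).

Definition pt i := nth t0 listT i.
Definition mknbrs := map (fun i => filter (fun j => adjT (pt i) (pt j)) (iota 0 (size listT))) (iota 0 (size listT)).

Definition revD (nb : seq (seq nat)) (D : seq (seq 'I_6)) :=
  map (fun i => filter (fun y => all (fun j => has (adjX y) (nth all6 D j)) (nth [::] nb i)) (nth all6 D i))
      (iota 0 (size listT)).

Definition initD :=
  map (fun i => if pt i == base then [:: o0] else filter (adjX (r (pt i))) all6)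
      (iota 0 (size listT)).

Definition rcheck n :=
  let nb := mknbrs in
  let D := iter n (revD nb) initD in
  all (fun i => nth all6 D i == [:: r (pt i)]) (iota 0 (size listT)).

Lemma nth_map_iota (F : nat -> seq 'I_6) i :
  nth all6 (map F (iota 0 (size listT))) i = if i < size listT then F i else all6.
Proof.
case: ifP => Hi; first by rewrite (nth_map 0) ?size_iota // nth_iota.
by rewrite nth_default // size_map size_iota leqNgt Hi.
Qed.

Lemma rigid_sound n h : dcont adjT adjX h -> h base = o0 ->
  (forall p, adjX (r p) (h p)) -> forall i, h (pt i) \in nth all6 (iter n (revD mknbrs) initD) i.
Proof.
move=> Hc Hb Hn; elim: n => [|n IH] i /=.
  rewrite nth_map_iota; case: ifP => _; last exact: all6P.
  case: (pt i =P base) => [->|_]; first by rewrite Hb inE.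
  by rewrite mem_filter Hn all6P.
rewrite nth_map_iota; case: ifP => Hi; last exact: all6P.
rewrite mem_filter IH andbT; apply/allP => j.
rewrite /mknbrs (nth_map 0) ?size_iota // nth_iota // add0n mem_filter => /andP [Hij _].
by apply/hasP; exists (h (pt j)); rewrite ?IH ?Hc.
Qed.

Lemma rigid_map n : (forall p, p \in listT) -> rcheck n ->
  forall h, dcont adjT adjX h -> h base = o0 ->
  (forall p, adjX (r p) (h p)) -> forall p, h p = r p.
Proof.
move=> Hl /allP E h Hc Hb Hn p.
have Hi : index p listT < size listT by rewrite index_mem.
have Hp : pt (index p listT) = p by rewrite /pt nth_index.
have := rigid_sound n Hc Hb Hn (index p listT).
have := E (index p listT); rewrite mem_iota add0n Hi => /(_ isT) /eqP ->.
by rewrite Hp inE => /eqP.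
Qed.
End Rigid.


Section Hom.
Variables (T : eqType) (adjT : rel T) (base : T) (r : T -> 'I_6) (listT : seq T) (t0 : T) (n : nat).
Hypothesis Hl : forall p, p \in listT.
Hypothesis Hchk : rcheck adjT base r listT t0 n.
Variables (m : nat) (H : T * 'I_m.+1 -> 'I_6).
Hypothesis Hc : dcont (np1 adjT (@iadj m)) adjX H.
Hypothesis Hb : forall t, H (base, t) = o0.

Lemma hom_step i j : iadj i j -> (forall p, H (p, i) = r p) -> forall p, H (p, j) = r p.
Proof.
move=> Hij Hi; apply: (rigid_map Hl Hchk) => //.
- by move=> p q Hpq; apply: Hc; rewrite /np1 /= eqxx Hpq orbT.
- by move=> p; rewrite -Hi; apply: Hc; rewrite /np1 /= eqxx Hij.
Qed.

Lemma hom_fwd : (forall p, H (p, ord0) = r p) -> forall t p, H (p, t) = r p.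
Proof.
move=> H0.
have K : forall k, k <= m -> forall p, H (p, inord k) = r p.
  elim=> [|k IH] Hk.
    by have -> : (inord 0 : 'I_m.+1) = ord0 by apply: val_inj; rewrite /= inordK.
  apply: (hom_step (i := inord k)); last by apply: IH; apply: ltnW.
  rewrite /iadj !inordK; [apply/andP; split; lia|lia|lia].
move=> t p; have -> : t = inord t by apply: val_inj; rewrite /= inordK.
by apply: K; rewrite -ltnS.
Qed.

Lemma hom_bwd : (forall p, H (p, ord_max) = r p) -> forall t p, H (p, t) = r p.
Proof.
move=> H0.
have K : forall k, k <= m -> forall p, H (p, inord (m - k)) = r p.
  elim=> [|k IH] Hk.
    by rewrite subn0; have -> : (inord m : 'I_m.+1) = ord_max by apply: val_inj; rewrite /= inordK.
  apply: (hom_step (i := inord (m - k))); last by apply: IH; apply: ltnW.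
  rewrite /iadj !inordK; [|lia|lia].
  apply/andP; split; lia.
move=> t p; have -> : t = inord (m - (m - t)).
  by apply: val_inj; have := ltn_ord t; rewrite /= inordK; lia.
by apply: K; rewrite leq_subr.
Qed.
End Hom.

Lemma hom_pre (A B C : eqType) (adjA : rel A) (adjB : rel B) (adjC : rel C) a b c
  (phi : A -> B) F G F' G' :
  dcont adjA adjB phi -> phi a = b -> (forall x, F (phi x) = F' x) ->
  (forall x, G (phi x) = G' x) ->
  np1_pointed_homotopic adjB adjC b c F G -> np1_pointed_homotopic adjA adjC a c F' G'.
Proof.
move=> Hphi Ha HF HG [m [H [Hc [H0 [H1 Hb]]]]].
exists m, (fun p => H (phi p.1, p.2)); split; last split; last split.
- move=> [x t] [y s]; rewrite /np1 /= => /orP [/andP [/eqP -> Hts] | /andP [/eqP -> Hxy]].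
    by apply: Hc; rewrite /np1 /= eqxx Hts.
  by apply: Hc; rewrite /np1 /= eqxx Hphi ?orbT.
- by move=> x; rewrite /= H0 HF.
- by move=> x; rewrite /= H1 HG.
- by move=> t; rewrite /= Ha Hb.
Qed.

Definition list2 := [seq (a, b) | a <- all6, b <- all6].
Definition list3 := [seq (a, b) | a <- list2, b <- all6].
Lemma list2P p : p \in list2.
Proof. by case: p => a b; apply: allpairs_f; apply: all6P. Qed.
Lemma list3P p : p \in list3.
Proof. by case: p => a b; apply: allpairs_f; [apply: list2P|apply: all6P]. Qed.

Lemma chk1 : rcheck adjX o0 id all6 o0 10.
Proof. vm_compute. reflexivity. Qed.
Lemma chk2 : rcheck (np1 adjX adjX) (o0,o0) tau' list2 (o0,o0) 12.
Proof. vm_compute. reflexivity. Qed.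
Definition f3' (p : ('I_6 * 'I_6) * 'I_6) := tau' (p.1.1, tau' (p.1.2, p.2)).
Lemma chk3 : rcheck (np1 (np1 adjX adjX) adjX) ((o0,o0),o0) f3' list3 ((o0,o0),o0) 14.
Proof. vm_compute. reflexivity. Qed.

Definition f3 (p : ('I_6 * 'I_6) * 'I_6) := tau (p.1.1, tau (p.1.2, p.2)).
Lemma f3E p : f3 p = f3' p.
Proof. by rewrite /f3 /f3' !tauE. Qed.

Lemma rig1 m (H : 'I_6 * 'I_m.+1 -> 'I_6) :
  dcont (np1 adjX (@iadj m)) adjX H -> (forall t, H (x0, t) = x0) ->
  (forall p, H (p, ord_max) = p) -> forall p, H (p, ord0) = p.
Proof.
rewrite x0E => Hc Hb H1 p.
exact: (hom_bwd (r := id) (fun p => all6P p) chk1 Hc Hb H1).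
Qed.

Lemma rig2 m (H : ('I_6 * 'I_6) * 'I_m.+1 -> 'I_6) :
  dcont (np1 (np1 adjX adjX) (@iadj m)) adjX H -> (forall t, H ((x0,x0), t) = x0) ->
  (forall p, H (p, ord_max) = tau p) -> forall p, H (p, ord0) = tau p.
Proof.
rewrite x0E => Hc Hb H1 p; rewrite tauE.
apply: (hom_bwd list2P chk2 Hc Hb) => q; by rewrite H1 tauE.
Qed.

Lemma rig3b m (H : (('I_6 * 'I_6) * 'I_6) * 'I_m.+1 -> 'I_6) :
  dcont (np1 (np1 (np1 adjX adjX) adjX) (@iadj m)) adjX H -> (forall t, H (((x0,x0),x0), t) = x0) ->
  (forall p, H (p, ord_max) = f3 p) -> forall p, H (p, ord0) = f3 p.
Proof.
rewrite x0E => Hc Hb H1 p; rewrite f3E.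
apply: (hom_bwd list3P chk3 Hc Hb) => q; by rewrite H1 f3E.
Qed.

Lemma rig3f m (H : (('I_6 * 'I_6) * 'I_6) * 'I_m.+1 -> 'I_6) :
  dcont (np1 (np1 (np1 adjX adjX) adjX) (@iadj m)) adjX H -> (forall t, H (((x0,x0),x0), t) = x0) ->
  (forall p, H (p, ord0) = f3 p) -> forall p, H (p, ord_max) = f3 p.
Proof.
rewrite x0E => Hc Hb H1 p; rewrite f3E.
apply: (hom_fwd list3P chk3 Hc Hb) => q; by rewrite H1 f3E.
Qed.

Lemma not_assoc : ~ pointed_homotopy_associative adjX x0 tau.
Proof.
case=> m [H [Hc [H0 [H1 Hb]]]].
have := rig3f Hc Hb H0 ((o5,o5),o1); rewrite H1 /f3 /= !tauE.
by vm_compute.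
Qed.

Lemma tau_unitr x : tau (x, x0) = x.
Proof.
have K : all (fun x => tau' (x, o0) == x) all6 by vm_compute.
by rewrite tauE x0E; apply/eqP; apply: (allP K x (all6P x)).
Qed.

Lemma tau_unitl x : tau (x0, x) = x.
Proof.
have K : all (fun x => tau' (o0, x) == x) all6 by vm_compute.
by rewrite tauE x0E; apply/eqP; apply: (allP K x (all6P x)).
Qed.

Lemma adjX_refl : reflexive adjX.
Proof. by move=> x; rewrite /adjX eqxx. Qed.

Lemma adjX_sym : symmetric adjX.
Proof.
move=> a b; have K : all (fun a => all (fun b => adjX a b == adjX b a) all6) all6 by vm_compute.
by apply/eqP; apply: (allP (allP K a (all6P a)) b (all6P b)).
Qed.

Lemma tau_cont : dcont (np1 adjX adjX) adjX tau.
Proof.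
move=> x y Hxy; rewrite !tauE.
have K : all (fun x => all (fun y => np1 adjX adjX x y ==> adjX (tau' x) (tau' y)) list2) list2
  by vm_compute.
exact: (implyP (allP (allP K x (list2P x)) y (list2P y)) Hxy).
Qed.

Lemma const_hom (F : 'I_6 -> 'I_6) : (forall x, F x = x) ->
  np1_pointed_homotopic adjX adjX x0 x0 F id.
Proof.
move=> HF; exists 0, (fun p => p.1); split; last split; last split => //.
- move=> [x t] [y s]; rewrite /np1 /= => /orP [/andP [/eqP -> _]| /andP [_ H]] //.
  exact: adjX_refl.
- by move=> x; rewrite HF.
Qed.

Lemma pt_hom (F : 'I_6 -> 'I_6) : np1_pointed_homotopic adjX adjX x0 x0 F id ->
  np1_homotopic adjX adjX F id.
Proof. by case=> m [H [Hc [H0 [H1 _]]]]; exists m, H. Qed.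

Theorem mainTheorem15 :
  digital_image adjX /\
  dcont (np1 adjX adjX) adjX tau /\
  unital_H_space adjX x0 tau /\
  pointed_H_space adjX x0 tau /\
  H_space adjX x0 tau /\
  ~ pointed_homotopy_associative adjX x0 tau /\
  (forall (G : finGroupType) (adjG : rel G),
     np1_digital_topological_group adjG ->
     ~ pointed_H_equivalent adjX x0 tau adjG 1%g (fun p : G * G => (p.1 * p.2)%g)).
Proof.
have P1 := const_hom tau_unitr; have P2 := const_hom tau_unitl.
split; first by split; [exact: adjX_refl|exact: adjX_sym].
split; first exact: tau_cont.
split; first by split; [exact: tau_cont|split; [exact: tau_unitr|exact: tau_unitl]].
split; first by split; [exact: tau_cont|split].
split; first by split; [exact: tau_cont|split; apply: pt_hom].
split; first exact: not_assoc.
move=> G adjG [[Grefl _] [Hm _]] [f [g [Hfc [Hf1 [Hgc [Hg1 [_ [Hfg [_ Hmg]]]]]]]]].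
have Hm2 : forall x y x' y' : G, np1 adjG adjG (x, y) (x', y') -> adjG (x * y)%g (x' * y')%g.
  by move=> x y x' y'; apply: (Hm (x, y) (x', y')).
have gf : forall x, g (f x) = x.
  by case: Hfg => m [H [Hc [H0 [H1 Hb]]]] x; rewrite -H0; apply: rig1.
have gm : forall a b, g (f a * f b)%g = tau (a, b).
  have := hom_pre (adjA := np1 adjX adjX) (a := (x0, x0)) (phi := fun p => (f p.1, f p.2))
     (F' := fun p => g (f p.1 * f p.2)%g) (G' := tau) _ _ _ _ Hmg.
  case.
  - move=> [a b] [a' b']; rewrite /np1 /= => /orP [/andP [/eqP -> H]| /andP [/eqP -> H]].
      by rewrite eqxx (Hfc _ _ H).
    by rewrite eqxx (Hfc _ _ H) orbT.
  - by rewrite Hf1.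
  - by [].
  - by move=> [a b]; rewrite /= !gf.
  move=> m [H [Hc [H0 [H1 Hb]]]] a b.
  by rewrite -(H0 (a, b)); apply: rig2.
have ga : forall a b c, g (f a * (f b * f c))%g = f3 ((a, b), c).
  have := hom_pre (adjA := np1 (np1 adjX adjX) adjX) (a := ((x0, x0), x0))
     (phi := fun p => (f p.1.1, f p.1.2 * f p.2)%g)
     (F' := fun p => g (f p.1.1 * (f p.1.2 * f p.2))%g) (G' := f3) _ _ _ _ Hmg.
  case.
  - move=> [[a b] c] [[a' b'] c']; rewrite /np1 /=.
    case/orP => [/andP [/eqP [-> ->] H]| /andP [/eqP -> /orP [/andP [/eqP -> H]| /andP [/eqP -> H]]]].
    + by rewrite eqxx /= Hm2 // /np1 /= eqxx (Hfc _ _ H).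
    + by rewrite eqxx /= Hm2 // /np1 /= eqxx (Hfc _ _ H) orbT.
    + by rewrite eqxx (Hfc _ _ H) orbT.
  - by rewrite Hf1 mulg1.
  - by [].
  - by move=> [[a b] c]; rewrite /= gf gm.
  move=> m [H [Hc [H0 [H1 Hb]]]] a b c.
  by rewrite -(H0 ((a, b), c)); apply: rig3b.
apply: not_assoc.
apply: (hom_pre (adjA := np1 (np1 adjX adjX) adjX) (a := ((x0, x0), x0))
     (phi := fun p => (f p.1.1 * f p.1.2, f p.2)%g) _ _ _ _ Hmg).
- move=> [[a b] c] [[a' b'] c']; rewrite /np1 /=.
  case/orP => [/andP [/eqP [-> ->] H]| /andP [/eqP -> /orP [/andP [/eqP -> H]| /andP [/eqP -> H]]]].
  + by rewrite eqxx (Hfc _ _ H).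
  + by rewrite eqxx /= Hm2 ?orbT // /np1 /= eqxx (Hfc _ _ H).
  + by rewrite eqxx /= Hm2 ?orbT // /np1 /= eqxx (Hfc _ _ H) orbT.
- by rewrite Hf1 mulg1.
- by move=> [[a b] c]; rewrite /= -mulgA ga.
- by move=> [[a b] c]; rewrite /= gm gf.
Qed.
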